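(* For every integer $d\ge 1$, a countable graph $G$ is a $d$-sphere graph if and only if $G\in\mathcal{S}^d$.
   Context: Let $\mathbb{D}^d=\{x\in\mathbb{R}^{d+1}: |x|\le 1\}$ and let $\mathcal{H}_d=\{\mathbb{D}^d\cap H: H \text{ a hyperplane of } \mathbb{R}^{d+1} \text{ meeting the interior of } \mathbb{D}^d\}$. A $d$-sphere graph is a graph that is the intersection graph of a subfamily of $\mathcal{H}_d$ (vertices identified with members of the family, adjacent iff the sets intersect). For $d\ge 2$, $\mathcal{S}^d$ is the class of graphs that are intersection graphs of families of spheres in $\mathbb{R}^d$ (a sphere being the boundary of a closed ball of positive radius); $\mathcal{S}^1$ is the class of circle graphs, i.e. intersection graphs of families of chords of the circle $\mathbb{S}^1$. *)

(* Defs.v *)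
From HB Require Import structures.
From mathcomp Require Import all_boot all_order all_algebra.
From mathcomp Require Import reals.
Set Implicit Arguments. Unset Strict Implicit. Unset Printing Implicit Defensive.
Import Order.TTheory GRing.Theory Num.Theory.
Local Open Scope ring_scope.

Section Defs.
Variable R : realType.

Definition dotp n (x y : 'rV[R]_n) : R := \sum_(i < n) x 0 i * y 0 i.
Definition normsq n (x : 'rV[R]_n) : R := dotp x x.

Definition unit_ball d (x : 'rV[R]_d.+1) : Prop := normsq x <= 1.

Definition is_Hd_member d (S : 'rV[R]_d.+1 -> Prop) : Prop :=
  exists (a : 'rV[R]_d.+1) (b : R),
    a != 0 /\ (exists x, dotp a x = b /\ normsq x < 1) /\
    (forall x, S x <-> (unit_ball x /\ dotp a x = b)).

Definition is_sphere n (S : 'rV[R]_n -> Prop) : Prop :=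
  exists (c : 'rV[R]_n) (r : R),
    0 < r /\ (forall x, S x <-> normsq (x - c) = r ^+ 2).

Definition is_chord (S : 'rV[R]_2 -> Prop) : Prop :=
  exists p q : 'rV[R]_2,
    p != q /\ normsq p = 1 /\ normsq q = 1 /\
    (forall x, S x <-> exists t : R, 0 <= t <= 1 /\ x = (1 - t) *: p + t *: q).

(* (V, adj) is the intersection graph of a subfamily of the family of sets
   satisfying P: vertices are identified with (pairwise distinct) members,
   distinct vertices adjacent iff the sets intersect. *)
Definition intersection_graph_of n (P : ('rV[R]_n -> Prop) -> Prop)
  (V : Type) (adj : V -> V -> Prop) : Prop :=
  exists f : V -> ('rV[R]_n -> Prop),
    (forall v, P (f v)) /\
    (forall u v, (forall x, f u x <-> f v x) -> u = v) /\
    (forall u v, u <> v -> (adj u v <-> exists x, f u x /\ f v x)).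

Definition is_d_sphere_graph (d : nat) (V : Type) (adj : V -> V -> Prop) : Prop :=
  intersection_graph_of (@is_Hd_member d) adj.

Definition in_Sd (d : nat) (V : Type) (adj : V -> V -> Prop) : Prop :=
  if (2 <= d)%N then intersection_graph_of (@is_sphere d) adj
  else intersection_graph_of is_chord adj.

End Defs.

Definition simple_graph (V : Type) (adj : V -> V -> Prop) : Prop :=
  (forall u v, adj u v -> adj v u) /\ (forall v, ~ adj v v).

Definition countable_type (V : Type) : Prop :=
  exists g : V -> nat, forall u v, g u = g v -> u = v.

(* Main.v *)
Require Import Defs.
From HB Require Import structures.
From mathcomp Require Import all_boot all_order all_algebra.
From mathcomp Require Import reals.
From mathcomp Require Import all_classical all_reals.
From mathcomp Require Import lebesgue_measure measure ereal.
From mathcomp Require Import ring lra zify.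
Set Implicit Arguments. Unset Strict Implicit. Unset Printing Implicit Defensive.
Import Order.TTheory GRing.Theory Num.Theory.
Local Open Scope ring_scope.

Section Vec.
Variable R : realType.
Variable n : nat.
Implicit Types x y z : 'rV[R]_n.

Lemma dotpC x y : dotp x y = dotp y x.
Proof. by rewrite /dotp; apply: eq_bigr => i _; rewrite mulrC. Qed.

Lemma dotpDl x y z : dotp (x + y) z = dotp x z + dotp y z.
Proof. by rewrite /dotp -big_split; apply: eq_bigr => i _; rewrite mxE mulrDl. Qed.

Lemma dotpZl k x y : dotp (k *: x) y = k * dotp x y.
Proof. by rewrite /dotp mulr_sumr; apply: eq_bigr => i _; rewrite mxE mulrA. Qed.

Lemma dotpNl x y : dotp (- x) y = - dotp x y.
Proof. by rewrite -scaleN1r dotpZl mulN1r. Qed.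

Lemma dotpBl x y z : dotp (x - y) z = dotp x z - dotp y z.
Proof. by rewrite dotpDl dotpNl. Qed.

Lemma dotpDr x y z : dotp z (x + y) = dotp z x + dotp z y.
Proof. by rewrite dotpC dotpDl !(dotpC z). Qed.

Lemma dotpZr k x y : dotp y (k *: x) = k * dotp y x.
Proof. by rewrite dotpC dotpZl dotpC. Qed.

Lemma dotpNr x y : dotp y (- x) = - dotp y x.
Proof. by rewrite dotpC dotpNl dotpC. Qed.

Lemma dotpBr x y z : dotp z (x - y) = dotp z x - dotp z y.
Proof. by rewrite dotpDr dotpNr. Qed.

Lemma dotp0l x : dotp 0 x = 0.
Proof. by rewrite -(scale0r 0) dotpZl mul0r. Qed.

Lemma dotp0r x : dotp x 0 = 0.
Proof. by rewrite dotpC dotp0l. Qed.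

Lemma normsq_ge0 x : 0 <= normsq x.
Proof. by rewrite /normsq /dotp; apply: sumr_ge0 => i _; rewrite -expr2 sqr_ge0. Qed.

Lemma normsq_eq0 x : normsq x = 0 -> x = 0.
Proof.
rewrite /normsq /dotp => /eqP; rewrite psumr_eq0; last first.
  by move=> i _; rewrite -expr2 sqr_ge0.
move=> /allP H; apply/matrixP => i j; rewrite (ord1 i) mxE.
have := H j (mem_index_enum j); rewrite /= mulf_eq0 orbb => /eqP //.
Qed.

Lemma normsq_gt0 x : x != 0 -> 0 < normsq x.
Proof.
move=> nz; rewrite lt_def normsq_ge0 andbT; apply/eqP => /normsq_eq0 H.
by rewrite H eqxx in nz.
Qed.

Lemma normsqD x y : normsq (x + y) = normsq x + 2 * dotp x y + normsq y.
Proof. rewrite /normsq !dotpDl !dotpDr (dotpC y x); ring. Qed.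

Lemma normsqB x y : normsq (x - y) = normsq x - 2 * dotp x y + normsq y.
Proof. rewrite /normsq !dotpBl !dotpBr (dotpC y x); ring. Qed.

Lemma normsqZ k x : normsq (k *: x) = k ^+ 2 * normsq x.
Proof. rewrite /normsq dotpZl dotpZr; ring. Qed.

Lemma cauchy_schwarz a x : dotp a x ^+ 2 <= normsq a * normsq x.
Proof.
have [->|anz] := eqVneq a 0.
  by rewrite dotp0l /normsq dotp0l !mul0r expr0n.
have pa := normsq_gt0 anz.
have := normsq_ge0 (normsq a *: x - dotp a x *: a).
rewrite normsqB !normsqZ dotpZl dotpZr (dotpC x a) => H.
have H2 : 0 <= normsq a * (normsq a * normsq x - dotp a x ^+ 2).
  by move: H; rewrite /normsq; set A := dotp a a; set B := dotp x x; set C := dotp a x;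
     move=> H; nra.
rewrite -subr_ge0; move: H2; rewrite pmulr_rge0 //.
Qed.

End Vec.


Section Coord.
Variable R : realType.
Variable d : nat.

Definition emb (y : 'rV[R]_d) (t : R) : 'rV[R]_d.+1 :=
  \row_(i < d.+1) match unlift ord_max i with Some j => y 0 j | None => t end.
Definition prj (x : 'rV[R]_d.+1) : 'rV[R]_d := \row_(j < d) x 0 (lift ord_max j).
Definition lst (x : 'rV[R]_d.+1) : R := x 0 ord_max.

Lemma widen_lift (i : 'I_d) : widen_ord (leqnSn d) i = lift ord_max i.
Proof. by apply: val_inj; rewrite /= /bump leqNgt ltn_ord. Qed.

Lemma emb_lift y t (j : 'I_d) : emb y t 0 (lift ord_max j) = y 0 j.
Proof. by rewrite /emb mxE liftK. Qed.

Lemma emb_max y t : emb y t 0 ord_max = t.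
Proof. by rewrite /emb mxE unlift_none. Qed.

Lemma prj_emb y t : prj (emb y t) = y.
Proof. by apply/matrixP => i j; rewrite (ord1 i) mxE emb_lift. Qed.

Lemma lst_emb y t : lst (emb y t) = t.
Proof. exact: emb_max. Qed.

Lemma emb_prj x : emb (prj x) (lst x) = x.
Proof.
apply/matrixP => i j; rewrite (ord1 i) /emb mxE.
by case: unliftP => [k ->|->]; rewrite ?mxE.
Qed.

Lemma dotp_emb y t z s : dotp (emb y t) (emb z s) = dotp y z + t * s.
Proof.
rewrite /dotp big_ord_recr /= !emb_max; congr (_ + _).
by apply: eq_bigr => i _; rewrite widen_lift !emb_lift.
Qed.

Lemma dotp_split x x' : dotp x x' = dotp (prj x) (prj x') + lst x * lst x'.
Proof. by rewrite -{1}(emb_prj x) -{1}(emb_prj x') dotp_emb. Qed.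

Lemma normsq_emb y t : normsq (emb y t) = normsq y + t ^+ 2.
Proof. by rewrite /normsq dotp_emb expr2. Qed.

Lemma emb_inj y t z s : emb y t = emb z s -> y = z /\ t = s.
Proof. by move=> E; split; [rewrite -(prj_emb y t) E prj_emb | rewrite -(lst_emb y t) E lst_emb]. Qed.

Definition Npole : 'rV[R]_d.+1 := emb 0 1.

(* inverse stereographic projection *)
Definition stg (y : 'rV[R]_d) : 'rV[R]_d.+1 :=
  emb ((2 / (normsq y + 1)) *: y) ((normsq y - 1) / (normsq y + 1)).

Definition pstg (x : 'rV[R]_d.+1) : 'rV[R]_d := (1 - lst x)^-1 *: prj x.

Lemma q1_neq0 (y : 'rV[R]_d) : normsq y + 1 != 0.
Proof. by rewrite gt_eqF // ltr_wpDl ?normsq_ge0. Qed.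

Lemma normsq_stg y : normsq (stg y) = 1.
Proof.
rewrite /stg normsq_emb normsqZ.
have := q1_neq0 y; set q := normsq y => H.
by field.
Qed.

Lemma lst_stg y : lst (stg y) != 1.
Proof.
rewrite /stg lst_emb; have := q1_neq0 y; set q := normsq y => H.
rewrite -subr_eq0.
have -> : (q - 1) / (q + 1) - 1 = - 2 / (q + 1) by field.
by rewrite mulf_eq0 invr_eq0 (negbTE H) orbF oppr_eq0 pnatr_eq0.
Qed.

Lemma stgK x : normsq x = 1 -> lst x != 1 -> stg (pstg x) = x.
Proof.
move=> nx lx; rewrite /stg /pstg normsqZ -[RHS](emb_prj x).
have E : normsq (prj x) = 1 - lst x ^+ 2.
  by move: nx; rewrite -{1}(emb_prj x) normsq_emb => <-; ring.
rewrite E; set t := lst x.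
have h1 : 1 - t != 0 by rewrite subr_eq0 eq_sym.
have h2 : (1 - t)^-1 ^+ 2 * (1 - t ^+ 2) + 1 = 2 / (1 - t) by field.
have h3 : (2:R) != 0 by rewrite pnatr_eq0.
rewrite h2 scalerA; congr emb.
  rewrite -[RHS]scale1r; congr (_ *: _); by field.
by field.
Qed.

Lemma pstg_stg_eq x : normsq x = 1 -> lst x = 1 -> x = Npole.
Proof.
move=> nx lx; rewrite -(emb_prj x) /Npole lx; congr emb.
apply: normsq_eq0; move: nx; rewrite -{1}(emb_prj x) normsq_emb lx.
rewrite expr1n => H; lra.
Qed.

Lemma dotp_stg (a : 'rV[R]_d.+1) y :
  dotp a (stg y) = (2 * dotp (prj a) y + lst a * (normsq y - 1)) / (normsq y + 1).
Proof.
rewrite /stg -{1}(emb_prj a) dotp_emb dotpZr.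
have := q1_neq0 y; set q := normsq y => h; field; done.
Qed.

End Coord.


Section Lines.
Variable R : realType.
Variable n : nat.
Implicit Types x v : 'rV[R]_n.

Lemma normsq_line x v t :
  normsq (x + t *: v) = normsq x + 2 * t * dotp x v + t ^+ 2 * normsq v.
Proof. by rewrite normsqD normsqZ dotpZr mulrA. Qed.

Lemma line_sphere x v : normsq x < 1 -> v != 0 ->
  exists t1 t2, t1 != t2 /\ normsq (x + t1 *: v) = 1 /\ normsq (x + t2 *: v) = 1.
Proof.
move=> hx hv; have hA := normsq_gt0 hv.
set A := normsq v in hA *; set B := dotp x v; set C := normsq x.
set D := B ^+ 2 - A * (C - 1).
have hx' : C < 1 by [].
have hAC : 0 < A * (1 - C) by apply: mulr_gt0 => //; lra.
have hB2 := sqr_ge0 B.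
have hD : 0 < D by rewrite /D (_ : A * (C - 1) = - (A * (1 - C))); [lra | ring].
set s := Num.sqrt D.
have hs : 0 < s by rewrite sqrtr_gt0.
have hs2 : s ^+ 2 = D by rewrite sqr_sqrtr // ltW.
have hA0 : A != 0 by rewrite gt_eqF.
exists ((- B + s) / A), ((- B - s) / A); split; last split.
- apply/eqP => E; have : (- B + s) = (- B - s).
    by apply: (mulIf (invr_neq0 hA0)).
  lra.
- rewrite normsq_line -/A -/B -/C.
  have -> : C + 2 * ((- B + s) / A) * B + ((- B + s) / A) ^+ 2 * A =
            C + (s ^+ 2 - B ^+ 2) / A by field.
  rewrite hs2 /D; field; done.
- rewrite normsq_line -/A -/B -/C.
  have -> : C + 2 * ((- B - s) / A) * B + ((- B - s) / A) ^+ 2 * A =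
            C + (s ^+ 2 - B ^+ 2) / A by field.
  rewrite hs2 /D; field; done.
Qed.

Lemma line_sphere_le x v : normsq x <= 1 -> v != 0 ->
  exists t, normsq (x + t *: v) = 1.
Proof.
rewrite le_eqVlt => /orP [/eqP h|h] hv.
  by exists 0; rewrite scale0r addr0.
by have [t1 [t2 [_ [h1 _]]]] := line_sphere h hv; exists t1.
Qed.

Lemma kernel2 (a1 a2 : 'rV[R]_n) : (3 <= n)%N ->
  exists v : 'rV[R]_n, v != 0 /\ dotp a1 v = 0 /\ dotp a2 v = 0.
Proof.
move=> hn.
pose A : 'M[R]_(n, 2) := \matrix_(i, j) (if j == ord0 then a1 0 i else a2 0 i).
pose K := kermx A.
have rK : (0 < \rank K)%N.
  rewrite /K mxrank_ker; have := rank_leq_col A; rewrite subn_gt0.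
  move=> h; exact: (leq_ltn_trans h).
have Knz : K != 0 by rewrite -mxrank_eq0 -lt0n.
case: (pickP (fun i => row i K != 0)) => [i Hi | H]; last first.
  exfalso; move/negP: Knz; apply; apply/eqP/row_matrixP => i.
  by rewrite row0; apply/eqP/negbFE/H.
exists (row i K); split => //.
have E : row i K *m A = 0 by rewrite -row_mul mulmx_ker row0.
have E0 := congr1 (fun M : 'M[R]_(1,2) => M 0 ord0) E.
have E1 := congr1 (fun M : 'M[R]_(1,2) => M 0 (@Ordinal 2 1 isT)) E.
move: E0 E1; rewrite /= !mxE => E0 E1; split.
  rewrite dotpC -[RHS]E0; apply: eq_bigr => j _; by rewrite !mxE.
rewrite dotpC -[RHS]E1; apply: eq_bigr => j _; by rewrite !mxE.
Qed.

End Lines.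


Section Refl.
Variable R : realType.
Variable n : nat.
Implicit Types w x y a : 'rV[R]_n.

Definition refl w x := x - (2 * dotp x w / normsq w) *: w.

Lemma dotp_refl_sym w a x : dotp (refl w a) x = dotp a (refl w x).
Proof.
rewrite /refl dotpBl dotpBr dotpZl dotpZr (dotpC w x); congr (_ - _).
by rewrite /normsq; ring.
Qed.

Lemma refl_invol w x : refl w (refl w x) = x.
Proof.
rewrite /refl; have [->|wnz] := eqVneq w 0; first by rewrite !scaler0 !subr0.
have hw := normsq_gt0 wnz; have hw0 : normsq w != 0 by rewrite gt_eqF.
set c1 := 2 * dotp x w / normsq w.
have -> : 2 * dotp (x - c1 *: w) w / normsq w = - c1.
  by rewrite dotpBl dotpZl -/(normsq w) /c1; field.
by rewrite scaleNr opprK subrK.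
Qed.

Lemma dotp_refl w x y : dotp (refl w x) (refl w y) = dotp x y.
Proof. by rewrite dotp_refl_sym refl_invol. Qed.

Lemma normsq_refl w x : normsq (refl w x) = normsq x.
Proof. exact: dotp_refl. Qed.

Lemma refl_swap p q : normsq p = 1 -> normsq q = 1 -> refl (p - q) q = p.
Proof.
move=> hp hq; rewrite /refl; have [E|wnz] := eqVneq (p - q) 0.
  by rewrite E scaler0 subr0; apply/eqP; rewrite eq_sym -subr_eq0 E.
have hw := normsq_gt0 wnz; have hw0 : normsq (p - q) != 0 by rewrite gt_eqF.
have E : 2 * dotp q (p - q) / normsq (p - q) = -1.
  move: hw0; rewrite dotpBr normsqB hp -/(normsq q) hq (dotpC q p) => hw0.
  by field.
by rewrite E scaleN1r opprK addrC subrK.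
Qed.

Lemma interior_pt a b : b ^+ 2 < normsq a -> exists x, dotp a x = b /\ normsq x < 1.
Proof.
move=> h; have hb := sqr_ge0 b.
have ha : 0 < normsq a by apply: le_lt_trans h.
have ha0 : normsq a != 0 by rewrite gt_eqF.
exists ((b / normsq a) *: a); split.
  by rewrite dotpZr -/(normsq a); field.
rewrite normsqZ (_ : (b / normsq a) ^+ 2 * normsq a = b ^+ 2 / normsq a); last by field.
by rewrite ltr_pdivrMr // mul1r.
Qed.

Lemma interior_nz a b : b ^+ 2 < normsq a -> a != 0.
Proof.
move=> h; apply/eqP => a0; move: h; rewrite a0 /normsq dotp0l => h.
by have := sqr_ge0 b; rewrite leNgt h.
Qed.

Lemma interior_cs a b : a != 0 -> (exists x, dotp a x = b /\ normsq x < 1) -> b ^+ 2 < normsq a.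
Proof.
move=> anz [x [<- hx]]; have ha := normsq_gt0 anz.
apply: (le_lt_trans (cauchy_schwarz a x)).
by rewrite -ltr_pdivlMl // mulVf ?gt_eqF.
Qed.

Lemma dotp_scale_iff (k : R) a x b : k != 0 ->
  (dotp (k *: a) x = k * b <-> dotp a x = b).
Proof. by move=> k0; rewrite dotpZl; split => [/(mulfI k0)|->]. Qed.

End Refl.

Section Hyp.
Variable R : realType.
Variable d : nat.

Definition ha (c : 'rV[R]_d) (r : R) : 'rV[R]_d.+1 :=
  emb (-2 *: c) (1 - (normsq c - r ^+ 2)).
Definition hb (c : 'rV[R]_d) (r : R) : R := - (1 + (normsq c - r ^+ 2)).

Lemma hyp_sph c r y : normsq (y - c) = r ^+ 2 <-> dotp (ha c r) (stg y) = hb c r.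
Proof.
have h : dotp (ha c r) (stg y) - hb c r = 2 * (normsq (y - c) - r ^+ 2) / (normsq y + 1).
  rewrite dotp_stg /ha prj_emb lst_emb dotpZl normsqB (dotpC y c) /hb.
  have := q1_neq0 y; set q := normsq y => hq; by field.
have h2 : (2 : R) != 0 by rewrite pnatr_eq0.
split => E.
  by apply/eqP; rewrite -subr_eq0 h E subrr mulr0 mul0r.
move: h; rewrite E subrr => /esym/eqP; rewrite mulf_eq0 invr_eq0 (negbTE (q1_neq0 y)) orbF.
by rewrite mulf_eq0 (negbTE h2) /= subr_eq0 => /eqP.
Qed.

Lemma ha_N c r : dotp (ha c r) (Npole R d) != hb c r.
Proof.
rewrite /Npole /ha /hb dotp_emb dotp0r add0r mulr1; apply/eqP => E.
have : (2 : R) = 0 by rewrite -[LHS]addr0 -{1}(subrr (normsq c - r ^+ 2)); lra.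
by move/eqP; rewrite pnatr_eq0.
Qed.

Lemma ha_hb c r : 0 < r -> hb c r ^+ 2 < normsq (ha c r).
Proof.
move=> hr; rewrite /ha /hb normsq_emb normsqZ.
have := normsq_ge0 c; set k := normsq c => hk.
have hr2 : 0 < r ^+ 2 by rewrite exprn_gt0.
rewrite -subr_gt0 (_ : _ - _ = 4 * r ^+ 2); first by rewrite mulr_gt0.
ring.
Qed.

Lemma emb_scale (k : R) (y : 'rV[R]_d) t : k *: emb y t = emb (k *: y) (k * t).
Proof.
apply/matrixP => i j; rewrite (ord1 i) !mxE; case: unliftP => [l _|_]; by rewrite ?mxE.
Qed.

Lemma hyp_to_sph (a : 'rV[R]_d.+1) b : lst a != b -> b ^+ 2 < normsq a ->
  exists c r, 0 < r /\ forall y, normsq (y - c) = r ^+ 2 <-> dotp a (stg y) = b.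
Proof.
move=> hab hin.
set al := prj a; set be := lst a; set de := be - b.
have de0 : de != 0 by rewrite subr_eq0.
have hde : 0 < de ^+ 2 by rewrite lt_def sqr_ge0 andbT expf_neq0.
have na : normsq a = normsq al + be ^+ 2 by rewrite -{1}(emb_prj a) normsq_emb.
set rr := (normsq a - b ^+ 2) / de ^+ 2.
have hrr : 0 < rr by rewrite divr_gt0 // subr_gt0.
exists ((- de^-1) *: al), (Num.sqrt rr); split; first by rewrite sqrtr_gt0.
have hr2 : Num.sqrt rr ^+ 2 = rr by rewrite sqr_sqrtr // ltW.
have h2 : (2 / de) != 0 by rewrite mulf_eq0 invr_eq0 pnatr_eq0 negb_or /=.
move=> y; rewrite hyp_sph.
have Ea : ha ((- de^-1) *: al) (Num.sqrt rr) = (2 / de) *: a.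
  rewrite /ha -[X in _ = _ *: X](emb_prj a) emb_scale -/al -/be; congr emb.
    by rewrite scalerA; congr (_ *: _); field.
  rewrite hr2 /rr na normsqZ /de; move: de0; rewrite /de => de0; by field.
have Eb : hb ((- de^-1) *: al) (Num.sqrt rr) = (2 / de) * b.
  rewrite /hb hr2 /rr na normsqZ /de; move: de0; rewrite /de => de0; by field.
by rewrite Ea Eb dotp_scale_iff.
Qed.

Lemma sphere_cases (x : 'rV[R]_d.+1) : normsq x = 1 -> x = Npole R d \/ exists y, x = stg y.
Proof.
move=> hx; have [h|h] := eqVneq (lst x) 1.
  by left; apply: pstg_stg_eq.
by right; exists (pstg x); rewrite stgK.
Qed.

Lemma disk_meet (a1 a2 : 'rV[R]_d.+1) b1 b2 : (2 <= d)%N -> dotp a1 (Npole R d) != b1 ->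
  (exists x, unit_ball x /\ dotp a1 x = b1 /\ dotp a2 x = b2) ->
  exists y, dotp a1 (stg y) = b1 /\ dotp a2 (stg y) = b2.
Proof.
move=> hd hN [x [hx [h1 h2]]].
have [w [wnz [w1 w2]]] := kernel2 a1 a2 (hd : (3 <= d.+1)%N).
have [t ht] := line_sphere_le hx wnz.
have e1 : dotp a1 (x + t *: w) = b1 by rewrite dotpDr dotpZr w1 mulr0 addr0.
have e2 : dotp a2 (x + t *: w) = b2 by rewrite dotpDr dotpZr w2 mulr0 addr0.
case: (sphere_cases ht) => [E|[y E]].
  by rewrite -E e1 eqxx in hN.
by exists y; rewrite -E.
Qed.

Lemma disk_det (a1 a2 : 'rV[R]_d.+1) b1 b2 : (2 <= d)%N ->
  (forall z, normsq z = 1 -> dotp a1 z = b1 -> dotp a2 z = b2) ->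
  forall x, unit_ball x -> dotp a1 x = b1 -> dotp a2 x = b2.
Proof.
move=> hd H x hx h1.
have [w [wnz [w1 _]]] := kernel2 a1 a1 (hd : (3 <= d.+1)%N).
move: hx; rewrite /unit_ball le_eqVlt => /orP [/eqP hx|hx]; first exact: H.
have [t1 [t2 [ht [e1 e2]]]] := line_sphere hx wnz.
have f1 : dotp a2 x + t1 * dotp a2 w = b2.
  by rewrite -dotpZr -dotpDr; apply: H => //; rewrite dotpDr dotpZr w1 mulr0 addr0.
have f2 : dotp a2 x + t2 * dotp a2 w = b2.
  by rewrite -dotpZr -dotpDr; apply: H => //; rewrite dotpDr dotpZr w1 mulr0 addr0.
have : (t1 - t2) * dotp a2 w = 0 by rewrite mulrBl; lra.
move/eqP; rewrite mulf_eq0 subr_eq0 (negbTE ht) /= => /eqP z.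
by move: f1; rewrite z mulr0 addr0.
Qed.

End Hyp.


Section Plane.
Variable R : realType.
Implicit Types a p q u w x y : 'rV[R]_2.

Definition i0 : 'I_2 := ord0.
Definition i1 : 'I_2 := lift ord0 (ord0 : 'I_1).

Lemma ord2_cases (j : 'I_2) : j = i0 \/ j = i1.
Proof. by case: j => [[|[|]]] // h; [left|right]; apply: val_inj. Qed.

Lemma dotp2 x y : dotp x y = x 0 i0 * y 0 i0 + x 0 i1 * y 0 i1.
Proof. by rewrite /dotp !big_ord_recl big_ord0 addr0. Qed.

Lemma vec2P x y : x 0 i0 = y 0 i0 -> x 0 i1 = y 0 i1 -> x = y.
Proof.
move=> h0 h1; apply/matrixP => i j; rewrite (ord1 i).
by case: (ord2_cases j) => ->.
Qed.

Definition perp w : 'rV[R]_2 := \row_(j < 2) (if j == i0 then - w 0 i1 else w 0 i0).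

Lemma perp0 w : perp w 0 i0 = - w 0 i1.
Proof. by rewrite mxE eqxx. Qed.
Lemma perp1 w : perp w 0 i1 = w 0 i0.
Proof. by rewrite mxE. Qed.

Lemma dotp_perp w : dotp (perp w) w = 0.
Proof. rewrite dotp2 perp0 perp1; ring. Qed.

Lemma perp_nz w : w != 0 -> perp w != 0.
Proof.
move=> wnz; apply/negP => /eqP h; move/negP: wnz; apply; apply/eqP/vec2P; rewrite mxE.
  by have := congr1 (fun m : 'rV[R]_2 => m 0 i1) h; rewrite perp1 mxE.
by have := congr1 (fun m : 'rV[R]_2 => m 0 i0) h; rewrite perp0 mxE => /eqP; rewrite oppr_eq0 => /eqP.
Qed.

Lemma parallel2 a u w : a != 0 -> dotp a u = 0 -> dotp a w = 0 -> w != 0 ->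
  u = (dotp u w / normsq w) *: w.
Proof.
move=> anz hu hw wnz; have hn := normsq_gt0 wnz; have hn0 : normsq w != 0 by rewrite gt_eqF.
move: hu hw; rewrite !dotp2 => hu hw.
set det := u 0 i0 * w 0 i1 - u 0 i1 * w 0 i0.
have e0 : a 0 i0 * det = 0.
  rewrite (_ : a 0 i0 * det = w 0 i1 * (a 0 i0 * u 0 i0 + a 0 i1 * u 0 i1)
                               - u 0 i1 * (a 0 i0 * w 0 i0 + a 0 i1 * w 0 i1)); last by rewrite /det; ring.
  by rewrite hu hw !mulr0 subrr.
have e1 : a 0 i1 * det = 0.
  rewrite (_ : a 0 i1 * det = - w 0 i0 * (a 0 i0 * u 0 i0 + a 0 i1 * u 0 i1)
                               + u 0 i0 * (a 0 i0 * w 0 i0 + a 0 i1 * w 0 i1)); last by rewrite /det; ring.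
  by rewrite hu hw !mulr0 addr0.
have hdet : det = 0.
  apply/eqP; apply/negP => /negP dnz; move/negP: anz; apply; apply/eqP/vec2P; rewrite mxE.
    by move/eqP: e0; rewrite mulf_eq0 (negbTE dnz) orbF => /eqP.
  by move/eqP: e1; rewrite mulf_eq0 (negbTE dnz) orbF => /eqP.
move: hn0; rewrite /normsq !dotp2 => hn0.
set N := w 0 i0 * w 0 i0 + w 0 i1 * w 0 i1 in hn0 *.
apply: vec2P; rewrite mxE; apply/eqP; rewrite -subr_eq0.
  rewrite (_ : _ - _ = w 0 i1 * det / N); first by rewrite hdet mulr0 mul0r.
  by rewrite /det /N; field.
rewrite (_ : _ - _ = - w 0 i0 * det / N); first by rewrite hdet mulr0 mul0r.
by rewrite /det /N; field.
Qed.

Lemma dotp_le1 (n : nat) (p q : 'rV[R]_n) : normsq p = 1 -> normsq q = 1 -> dotp p q <= 1.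
Proof. move=> hp hq; have := normsq_ge0 (p - q); rewrite normsqB hp hq => h; lra. Qed.

Lemma dotp_lt1 (n : nat) (p q : 'rV[R]_n) : p != q -> normsq p = 1 -> normsq q = 1 -> dotp p q < 1.
Proof.
move=> pq hp hq; have : p - q != 0 by rewrite subr_eq0.
move/normsq_gt0; rewrite normsqB hp hq => h; lra.
Qed.

Lemma seg a p q b : a != 0 -> p != q -> normsq p = 1 -> normsq q = 1 ->
  dotp a p = b -> dotp a q = b ->
  forall x, (unit_ball x /\ dotp a x = b) <-> exists t, 0 <= t <= 1 /\ x = (1 - t) *: p + t *: q.
Proof.
move=> anz pq hp hq hap haq x; have hpq := dotp_le1 hp hq; split.
  case=> hx hax.
  have wnz : q - p != 0 by rewrite subr_eq0 eq_sym.
  have hu : dotp a (x - p) = 0 by rewrite dotpBr hax hap subrr.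
  have hw : dotp a (q - p) = 0 by rewrite dotpBr haq hap subrr.
  have E := parallel2 anz hu hw wnz; set s := _ / _ in E.
  have hxs : x = p + s *: (q - p) by rewrite -E addrC subrK.
  have hm := normsq_gt0 wnz.
  move: hx hm; rewrite /unit_ball hxs normsq_line normsqB hp hq dotpBr -/(normsq p) hp (dotpC q p).
  set c := dotp p q => hx hm.
  have hs : s ^+ 2 - s <= 0.
    have : (1 - 2 * c + 1) * (s ^+ 2 - s) <= 0.
      by rewrite (_ : _ * _ = (1 + 2 * s * (c - 1) + s ^+ 2 * (1 - 2 * c + 1)) - 1); [lra|ring].
    by rewrite pmulr_rle0.
  exists s; split; first by apply/andP; split; nra.
  by apply/matrixP => i j; rewrite !mxE; ring.
case=> t [/andP [t0 t1] ->]; split; last first.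
  by rewrite dotpDr !dotpZr hap haq; ring.
rewrite /unit_ball normsqD !normsqZ dotpZl dotpZr hp hq.
rewrite -subr_ge0 (_ : 1 - _ = 2 * (t * (1 - t) * (1 - dotp p q))); last by ring.
by rewrite !mulr_ge0 // ?subr_ge0.
Qed.

Lemma Hd1_chord (S : 'rV[R]_2 -> Prop) : is_Hd_member (R := R) (d := 1) S <-> is_chord S.
Proof.
split.
  case=> a [b [anz [[x0 [hx0 hx0']] HS]]].
  have vnz : perp a != 0 by apply: perp_nz.
  have hav : dotp a (perp a) = 0 by rewrite dotpC dotp_perp.
  have [t1 [t2 [ht [e1 e2]]]] := line_sphere hx0' vnz.
  have pq : x0 + t1 *: perp a != x0 + t2 *: perp a.
    apply/negP => /eqP /addrI /eqP; rewrite -subr_eq0 -scalerBl scaler_eq0 subr_eq0 (negbTE ht).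
    by rewrite (negbTE vnz).
  exists (x0 + t1 *: perp a), (x0 + t2 *: perp a); split => //; split => //; split => // x.
  rewrite HS; apply: seg => //.
    by rewrite dotpDr dotpZr hav mulr0 addr0.
  by rewrite dotpDr dotpZr hav mulr0 addr0.
case=> p [q [pq [hp [hq HS]]]].
have wnz : q - p != 0 by rewrite subr_eq0 eq_sym.
have anz := perp_nz wnz.
have haq : dotp (perp (q - p)) q = dotp (perp (q - p)) p.
  by apply/eqP; rewrite -subr_eq0 -dotpBr dotp_perp.
exists (perp (q - p)), (dotp (perp (q - p)) p); split => //; split.
  exists ((1 / 2) *: (p + q)); split.
    by rewrite dotpZr dotpDr haq; field.
  rewrite normsqZ normsqD hp hq.
  have := dotp_lt1 pq hp hq => h; lra.
move=> x; rewrite HS; split.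
  by move=> h; apply/seg; [exact: anz|exact: pq|exact: hp|exact: hq| |exact: haq|].
by move=> h; apply/(seg anz pq hp hq (erefl _) haq).
Qed.

End Plane.

Local Open Scope classical_set_scope.
Local Open Scope ring_scope.

Lemma R_uncountable (R : realType) (B : set R) : countable B -> exists x, ~ B x.
Proof.
move=> cB; apply/not_existsP => H.
have sub : [set` `]-oo, +oo[%R] `<=` B by move=> x _; have := H x; case: (pselect (B x)).
have := countable_lebesgue_measure0 (sub_countable (subset_card_le sub) cB).
by rewrite lebesgue_measure_itv /=.
Qed.


Section Avoid.
Variable R : realType.

Lemma roots_finite (p : {poly R}) : p != 0 -> finite_set [set x | root p x].
Proof.
elim: {p}(size p) {-2}p (leqnn (size p)) => [|m IH] p hs pnz.
  by move: hs; rewrite leqn0 size_poly_eq0 (negbTE pnz).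
case: (pselect (exists x, root p x)) => [[x /factor_theorem [q hq]]|nr]; last first.
  rewrite (_ : [set x | root p x] = set0) ?finite_set0 //.
  by apply/seteqP; split => y //= ry; apply: nr; exists y.
have qnz : q != 0 by apply: contraNneq pnz => q0; rewrite hq q0 mul0r.
have sq : (size q <= m)%N.
  move: hs; rewrite hq size_Mmonic ?monicXsubC // size_XsubC addn2 /=.
  by [].
apply: (sub_finite_set (B := [set y | root q y] `|` [set x])).
  by move=> y /=; rewrite hq rootM root_XsubC => /orP [h|/eqP h]; [left|right].
by rewrite finite_setU; split; [exact: IH | exact: finite_set1].
Qed.

Variable d : nat.

Definition mom (s : R) : 'rV[R]_d := \row_(i < d) s ^+ i.+1.

Definition Ppol (a : 'rV[R]_d.+1) (b : R) : {poly R} :=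
  \sum_(i < d) (2 * prj a 0 i) *: 'X^(i.+1) + (lst a - b) *: \sum_(i < d) 'X^((i.+1).*2)
  - (lst a + b)%:P.

Lemma Ppol_eval a b s :
  (Ppol a b).[s] = (normsq (mom s) + 1) * (dotp a (stg (mom s)) - b).
Proof.
rewrite dotp_stg.
have E1 : dotp (prj a) (mom s) = \sum_(i < d) prj a 0 i * s ^+ i.+1.
  by apply: eq_bigr => i _; rewrite [mom s 0 i]mxE.
have E2 : normsq (mom s) = \sum_(i < d) s ^+ ((i.+1).*2).
  by apply: eq_bigr => i _; rewrite mxE -expr2 -exprM muln2.
rewrite /Ppol !hornerE !horner_sum E1 E2.
have E3 : \sum_(i < d) ((2 * prj a 0 i) *: 'X^(i.+1)).[s] =
          2 * \sum_(i < d) prj a 0 i * s ^+ i.+1.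
  by rewrite mulr_sumr; apply: eq_bigr => i _; rewrite hornerZ hornerXn mulrA.
have E4 : \sum_(i < d) ('X^((i.+1).*2) : {poly R}).[s] = \sum_(i < d) s ^+ ((i.+1).*2).
  by apply: eq_bigr => i _; rewrite hornerXn.
rewrite E3 E4.
have := q1_neq0 (mom s); rewrite E2.
set A := \sum_(i < d) _ ; set Q := \sum_(i < d) _ => h.
by field.
Qed.

Lemma sum_pick (c : 'I_d -> R) (e : 'I_d -> nat) (k : nat) (j : 'I_d) :
  e j = k -> (forall i, e i = k -> i = j) ->
  \sum_(i < d) c i * (k == e i)%:R = c j.
Proof.
move=> ej ue; rewrite (bigD1 j) //= ej eqxx mulr1 big1 ?addr0 // => i hij.
case: eqP => [h|_]; last by rewrite mulr0.
by rewrite (ue i (esym h)) eqxx in hij.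
Qed.

Lemma sum_none (c : 'I_d -> R) (e : 'I_d -> nat) (k : nat) :
  (forall i, e i <> k) -> \sum_(i < d) c i * (k == e i)%:R = 0.
Proof. by move=> h; rewrite big1 // => i _; case: eqP => [/esym/h|_] //; rewrite mulr0. Qed.

Lemma coefPpol a b k : (Ppol a b)`_k =
  \sum_(i < d) (2 * prj a 0 i) * (k == i.+1)%:R +
  (lst a - b) * \sum_(i < d) 1 * (k == (i.+1).*2)%:R - (if k == 0%N then lst a + b else 0).
Proof.
rewrite /Ppol coefB coefD coefC coefZ !coef_sum; congr (_ + _ * _ - _).
  by apply: eq_bigr => i _; rewrite coefZ coefXn.
by apply: eq_bigr => i _; rewrite coefXn mul1r.
Qed.

Lemma Ppol_neq0 a b : (1 <= d)%N -> a != 0 -> Ppol a b != 0.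
Proof.
move=> hd anz.
have [hb|hb] := eqVneq (lst a) b; last first.
  have jd : (d.-1 < d)%N by rewrite prednK.
  apply/eqP => /(congr1 (fun p : {poly R} => p`_(d.*2))); rewrite coefPpol coef0.
  rewrite sum_none; last by move=> i h; move: h (ltn_ord i); rewrite -muln2; lia.
  rewrite (@sum_pick _ _ _ (Ordinal jd)) /=; last 2 first.
  - by rewrite prednK.
  - move=> i h; apply: val_inj => /=; move: h; rewrite -!muln2; lia.
  rewrite -muln2 muln_eq0 /= (negbTE (lt0n_neq0 hd)) subr0 add0r mulr1 => /eqP.
  by rewrite subr_eq0 (negbTE hb).
case: (pickP (fun j => prj a 0 j != 0)) => [j hj|h0].
  apply/eqP => /(congr1 (fun p : {poly R} => p`_(j.+1))); rewrite coefPpol coef0.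
  rewrite hb subrr mul0r addr0 subr0 (@sum_pick _ _ _ j) //; last first.
    by move=> i [/val_inj].
  by move/eqP; rewrite mulf_eq0 pnatr_eq0 (negbTE hj).
have pa0 : prj a = 0.
  by apply/matrixP => i j; rewrite (ord1 i) [RHS]mxE; apply/eqP/negbFE/h0.
have la : lst a != 0.
  by apply: contraNneq anz => h; rewrite -(emb_prj a) pa0 h; apply/eqP/matrixP => i j;
    rewrite (ord1 i) !mxE; case: unliftP => [k _|_]; rewrite ?mxE.
apply/eqP => /(congr1 (fun p : {poly R} => p`_0)); rewrite coefPpol coef0.
rewrite sum_none // hb subrr mul0r addr0 add0r /= -hb => /eqP.
rewrite oppr_eq0; apply/negP; rewrite -mulr2n mulrn_eq0 negb_or /=.
exact: la.
Qed.

Lemma avoid_hyp (V : Type) (a : V -> 'rV[R]_d.+1) (b : V -> R) :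
  (1 <= d)%N -> countable_type V -> (forall v, a v != 0) ->
  exists p, normsq p = 1 /\ forall v, dotp (a v) p != b v.
Proof.
move=> hd [g hg] anz.
pose B := \bigcup_(v in [set: V]) [set s | root (Ppol (a v) (b v)) s].
have cB : countable B.
  apply: bigcup_countable.
    by apply/countable_injP; exists g => u v _ _; apply: hg.
  by move=> v _; apply: finite_set_countable; apply: roots_finite; apply: Ppol_neq0.
have [s ns] := R_uncountable cB.
exists (stg (mom s)); split; first exact: normsq_stg.
move=> v; apply/eqP => E; apply: ns; exists v => //=.
by rewrite /root Ppol_eval E subrr mulr0.
Qed.

End Avoid.

Local Close Scope classical_set_scope.

Lemma choice2 (V A B : Type) (P : V -> A -> B -> Prop) :
  (forall v, exists a b, P v a b) -> exists (fa : V -> A) (fb : V -> B), forall v, P v (fa v) (fb v).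
Proof.
move=> H.
exists (fun v => proj1_sig (cid (H v))).
exists (fun v => proj1_sig (cid (proj2_sig (cid (H v))))).
by move=> v; exact: (proj2_sig (cid (proj2_sig (cid (H v))))).
Qed.

Section Main.
Variable R : realType.

Lemma ig_equiv (n : nat) (P Q : ('rV[R]_n -> Prop) -> Prop) (V : Type) (adj : V -> V -> Prop) :
  (forall S, P S <-> Q S) -> intersection_graph_of P adj -> intersection_graph_of Q adj.
Proof. by move=> PQ [f [Hf H]]; exists f; split => // v; apply/PQ. Qed.

Lemma dotp_N (d : nat) (a : 'rV[R]_d.+1) : dotp a (Npole R d) = lst a.
Proof. by rewrite /Npole dotp_split prj_emb lst_emb dotp0r add0r mulr1. Qed.

Lemma normsq_N (d : nat) : normsq (Npole R d) = 1.
Proof. by rewrite /Npole normsq_emb /normsq dotp0l add0r expr1n. Qed.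

Lemma unit_ball_stg (d : nat) (y : 'rV[R]_d) : unit_ball (stg y).
Proof. by rewrite /unit_ball normsq_stg. Qed.

Lemma fwd (d : nat) (V : Type) (adj : V -> V -> Prop) :
  (2 <= d)%N -> countable_type V ->
  intersection_graph_of (@is_Hd_member R d) adj -> intersection_graph_of (@is_sphere R d) adj.
Proof.
move=> hd hV [g [Hg [ginj gadj]]].
have [a [b Hab]] := choice2 Hg.
have anz v : a v != 0 by have [h _] := Hab v.
have HS v x : g v x <-> unit_ball x /\ dotp (a v) x = b v by have [_ [_ h]] := Hab v; apply: h.
have hin v : b v ^+ 2 < normsq (a v) by have [h [h2 _]] := Hab v; apply: interior_cs.
have [p [hp hpv]] := avoid_hyp b (ltnW hd) hV anz.
set w := p - Npole R d.
pose a' v := refl w (a v).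
have key v x : dotp (a' v) x = dotp (a v) (refl w x) by rewrite dotp_refl_sym.
have hN v : dotp (a' v) (Npole R d) != b v.
  by rewrite key /w refl_swap ?normsq_N.
have hl v : lst (a' v) != b v by rewrite -dotp_N.
have hin' v : b v ^+ 2 < normsq (a' v) by rewrite /a' normsq_refl.
have [c [r Hcr]] := choice2 (fun v => hyp_to_sph (hl v) (hin' v)).
have gx v x : g v x <-> unit_ball (refl w x) /\ dotp (a' v) (refl w x) = b v.
  by rewrite HS key refl_invol /unit_ball normsq_refl.
exists (fun v y => normsq (y - c v) = r v ^+ 2); split.
  by move=> v; exists (c v), (r v); have [h _] := Hcr v.
split.
  move=> u v Fuv; apply: ginj => x; rewrite !gx.
  have dd : forall u v, (forall y, normsq (y - c u) = r u ^+ 2 -> normsq (y - c v) = r v ^+ 2) ->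
     forall x, unit_ball x -> dotp (a' u) x = b u -> dotp (a' v) x = b v.
    move=> u1 v1 H1; apply: disk_det => // z hz.
    case: (sphere_cases hz) => [->|[y ->]]; first by move=> E; have := hN u1; rewrite E eqxx.
    have [_ Hu] := Hcr u1; have [_ Hv] := Hcr v1.
    by move/Hu => /H1 /Hv.
  split => [][h1 h2]; split => //.
    by apply: (dd u v) => // y; exact: (proj1 (Fuv y)).
  by apply: (dd v u) => // y; exact: (proj2 (Fuv y)).
move=> u v uv; rewrite gadj //; split.
  case=> x [/gx [h1 h2] /gx [h3 h4]].
  have [y [e1 e2]] := disk_meet hd (hN u) (ex_intro _ (refl w x) (conj h1 (conj h2 h4))).
  exists y; split; [exact/(proj2 (Hcr u))|exact/(proj2 (Hcr v))].
case=> y [/(proj2 (Hcr u)) e1 /(proj2 (Hcr v)) e2].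
exists (refl w (stg y)); rewrite !gx refl_invol.
by split; split => //; apply: unit_ball_stg.
Qed.

Lemma bwd (d : nat) (V : Type) (adj : V -> V -> Prop) :
  (2 <= d)%N ->
  intersection_graph_of (@is_sphere R d) adj -> intersection_graph_of (@is_Hd_member R d) adj.
Proof.
move=> hd [f [Hf [finj fadj]]].
have [c [r Hcr]] := choice2 Hf.
pose g v x := unit_ball x /\ dotp (ha (c v) (r v)) x = hb (c v) (r v).
have fg v y : f v y <-> g v (stg y).
  have [hr H] := Hcr v; rewrite H hyp_sph /g.
  by split => [h|[_ h]] //; split => //; apply: unit_ball_stg.
exists g; split.
  move=> v; have [hr _] := Hcr v; have hin := ha_hb (c v) hr.
  exists (ha (c v) (r v)), (hb (c v) (r v)); split; first exact: interior_nz hin.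
  by split; [exact: interior_pt|].
split.
  by move=> u v Guv; apply: finj => y; rewrite !fg.
move=> u v uv; rewrite fadj //; split.
  by case=> y [/fg h1 /fg h2]; exists (stg y).
case=> x [[h1 h2] [_ h3]].
have [y [e1 e2]] := disk_meet hd (ha_N (c u) (r u)) (ex_intro _ x (conj h1 (conj h2 h3))).
by exists y; rewrite !fg /g; split; split => //; apply: unit_ball_stg.
Qed.

End Main.

Theorem mainTheorem3 (R : realType) (d : nat) (V : Type) (adj : V -> V -> Prop) :
  (1 <= d)%N -> simple_graph adj -> countable_type V ->
  (is_d_sphere_graph R d adj <-> in_Sd R d adj).
Proof.
move=> hd _ hV; rewrite /in_Sd /is_d_sphere_graph; case: ifP => hd2.
  by split; [apply: fwd|apply: bwd].
have d1 : d = 1%N by apply/eqP; rewrite eqn_leq hd andbT leqNgt hd2.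
subst d; split; apply: ig_equiv => S; [exact: Hd1_chord| symmetry; exact: Hd1_chord].
Qed.
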